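(* Let $\mathsf{F},\mathsf{B}:\mathbf{Set}\to\mathbf{Set}$ be functors. If $\mathsf{F}$ and $\mathsf{B}$ preserve monomorphisms whose domain is the empty set, then every homomorphism $h:(X,f)\to(Y,g)$ in $\mathit{Dialg}(\mathsf{F},\mathsf{B})$ factors as $h=m\circ e$, where $e:(X,f)\to(X',f')$ and $m:(X',f')\to(Y,g)$ are dialgebra homomorphisms whose underlying functions are respectively surjective and injective, and this factorisation is unique up to isomorphism of dialgebras. Without the assumption on $\mathsf{F}$ and $\mathsf{B}$, such a factorisation still exists for every homomorphism $h:(X,f)\to(Y,g)$ with $X\neq\emptyset$.
   Context: For functors $\mathsf{F},\mathsf{B}:\mathbf{Set}\to\mathbf{Set}$, an $(\mathsf{F},\mathsf{B})$-dialgebra is a pair $(X,f)$ with $X$ a set (the carrier) and $f:\mathsf{F}X\to\mathsf{B}X$ a function. A homomorphism $h:(X,f)\to(Y,g)$ is a function $h:X\to Y$ with $g\circ\mathsf{F}h=\mathsf{B}h\circ f$. Dialgebras and homomorphisms form the category $\mathit{Dialg}(\mathsf{F},\mathsf{B})$. *)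

(* Defs.v *)
Record SetFunctor := {
  Fobj : Type -> Type;
  Fmap : forall A B : Type, (A -> B) -> Fobj A -> Fobj B;
  Fmap_id : forall (A : Type) (a : Fobj A), Fmap A A (fun x => x) a = a;
  Fmap_comp : forall (A B C : Type) (u : A -> B) (v : B -> C) (a : Fobj A),
      Fmap A C (fun x => v (u x)) a = Fmap B C v (Fmap A B u a)
}.

Arguments Fmap s {A B} _ _.

Definition injective {A B : Type} (u : A -> B) : Prop :=
  forall x y, u x = u y -> x = y.

Definition surjective {A B : Type} (u : A -> B) : Prop :=
  forall y, exists x, u x = y.

Definition preserves_empty_monos (F : SetFunctor) : Prop :=
  forall (E Y : Type) (m : E -> Y), (E -> False) -> injective m ->
    injective (Fmap F m).

Definition dialg_hom (F B : SetFunctor) {X Y : Type}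
  (f : Fobj F X -> Fobj B X) (g : Fobj F Y -> Fobj B Y) (h : X -> Y) : Prop :=
  forall a : Fobj F X, g (Fmap F h a) = Fmap B h (f a).

Definition epi_mono_factorisation (F B : SetFunctor) {X Y X' : Type}
  (f : Fobj F X -> Fobj B X) (g : Fobj F Y -> Fobj B Y) (h : X -> Y)
  (f' : Fobj F X' -> Fobj B X') (e : X -> X') (m : X' -> Y) : Prop :=
  dialg_hom F B f f' e /\ dialg_hom F B f' g m /\
  surjective e /\ injective m /\ (forall x, h x = m (e x)).

(* Main.v *)
Require Import Defs.

From Stdlib Require Import ClassicalEpsilon FunctionalExtensionality Classical.

Lemma Fmap_ext (F : SetFunctor) (A B : Type) (u v : A -> B) (a : Fobj F A) :
  (forall x, u x = v x) -> Fmap F u a = Fmap F v a.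
Proof. intro H. assert (u = v) as E by (apply functional_extensionality; exact H). rewrite E. reflexivity. Qed.

Lemma Fmap_comp' (F : SetFunctor) (A B C : Type) (u : A -> B) (v : B -> C) (a : Fobj F A) :
  Fmap F v (Fmap F u a) = Fmap F (fun x => v (u x)) a.
Proof. symmetry. apply Fmap_comp. Qed.

Lemma inj_inh (F : SetFunctor) (A Y : Type) (m : A -> Y) :
  inhabited A -> injective m -> injective (Fmap F m).
Proof.
  intros [x0] Hm.
  set (r := fun y : Y => match excluded_middle_informative (exists z, m z = y) with
                        | left H => proj1_sig (constructive_indefinite_description _ H)
                        | right _ => x0 end).
  assert (Hr : forall z, r (m z) = z).
  { intro z. unfold r. destruct excluded_middle_informative as [H|H].
    - destruct constructive_indefinite_description as [w Hw]. simpl. now apply Hm.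
    - exfalso. apply H. eauto. }
  intros a b Hab.
  assert (E : forall c, Fmap F r (Fmap F m c) = c).
  { intro c. rewrite Fmap_comp'. rewrite (Fmap_ext F _ _ _ (fun x => x)); auto. apply Fmap_id. }
  rewrite <- (E a), <- (E b), Hab. reflexivity.
Qed.

Lemma inj_pres (F : SetFunctor) (A Y : Type) (m : A -> Y) :
  preserves_empty_monos F -> injective m -> injective (Fmap F m).
Proof.
  intros HF Hm. destruct (classic (inhabited A)) as [Hi|Hn].
  - now apply inj_inh.
  - apply HF; [intro a; apply Hn; now constructor | exact Hm].
Qed.

Definition sect {A B : Type} (e : A -> B) (He : surjective e) (y : B) : A :=
  proj1_sig (constructive_indefinite_description _ (He y)).
Lemma sect_spec {A B : Type} (e : A -> B) (He : surjective e) y : e (sect e He y) = y.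
Proof. unfold sect. destruct constructive_indefinite_description. auto. Qed.

Lemma fact_exists (F B : SetFunctor) (X Y : Type) (f : Fobj F X -> Fobj B X)
  (g : Fobj F Y -> Fobj B Y) (h : X -> Y) :
  dialg_hom F B f g h ->
  (forall (A : Type) (m : A -> Y), injective m -> (inhabited X -> inhabited A) ->
      injective (Fmap B m)) ->
  exists (X' : Type) (f' : Fobj F X' -> Fobj B X') (e : X -> X') (m : X' -> Y),
    epi_mono_factorisation F B f g h f' e m.
Proof.
  intros Hh Hinj.
  set (X' := {y : Y | exists x, h x = y}).
  set (e := fun x => exist (fun y => exists x, h x = y) (h x) (ex_intro _ x eq_refl) : X').
  set (m := fun z : X' => proj1_sig z).
  assert (He : surjective e).
  { intros [y [x Hx]]. exists x. unfold e. subst y. reflexivity. }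
  assert (Hm : injective m).
  { intros [a Ha] [b Hb] E. simpl in E. subst. f_equal. apply proof_irrelevance. }
  assert (HBm : injective (Fmap B m)).
  { apply Hinj; auto. intros [x]. constructor. exact (e x). }
  set (s := sect e He).
  set (f' := fun b => Fmap B e (f (Fmap F s b))).
  assert (Hs : forall y, m y = h (s y)).
  { intro y. unfold s. rewrite <- (sect_spec e He y) at 1. reflexivity. }
  assert (Key : forall b, Fmap B m (f' b) = g (Fmap F m b)).
  { intro b. unfold f'. rewrite Fmap_comp'.
    rewrite (Fmap_ext B _ _ _ h) by reflexivity. rewrite <- Hh.
    rewrite Fmap_comp'. f_equal. apply Fmap_ext. intro. symmetry. apply Hs. }
  exists X', f', e, m. split; [|split; [|split; [|split]]]; auto.
  - intro a. apply HBm. rewrite Key. rewrite Fmap_comp'.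
    rewrite Fmap_comp'. rewrite (Fmap_ext F _ _ _ h) by reflexivity. rewrite Hh.
    apply Fmap_ext. reflexivity.
  - intro b. symmetry. apply Key.
Qed.

Lemma fact_unique (F B : SetFunctor) (X Y : Type) (f : Fobj F X -> Fobj B X)
  (g : Fobj F Y -> Fobj B Y) (h : X -> Y) :
  (forall (A : Type) (m : A -> Y), injective m -> injective (Fmap B m)) ->
  forall (X1 : Type) (f1 : Fobj F X1 -> Fobj B X1) (e1 : X -> X1) (m1 : X1 -> Y)
         (X2 : Type) (f2 : Fobj F X2 -> Fobj B X2) (e2 : X -> X2) (m2 : X2 -> Y),
    epi_mono_factorisation F B f g h f1 e1 m1 ->
    epi_mono_factorisation F B f g h f2 e2 m2 ->
    exists (phi : X1 -> X2) (psi : X2 -> X1),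
      dialg_hom F B f1 f2 phi /\ dialg_hom F B f2 f1 psi /\
      (forall z, psi (phi z) = z) /\ (forall w, phi (psi w) = w) /\
      (forall x, phi (e1 x) = e2 x) /\ (forall z, m2 (phi z) = m1 z).
Proof.
  intros Hinj X1 f1 e1 m1 X2 f2 e2 m2 [H1e [H1m [S1 [I1 C1]]]] [H2e [H2m [S2 [I2 C2]]]].
  set (phi := fun z => e2 (sect e1 S1 z)).
  set (psi := fun w => e1 (sect e2 S2 w)).
  assert (P1 : forall z, m2 (phi z) = m1 z).
  { intro z. unfold phi. rewrite <- C2, C1, sect_spec. reflexivity. }
  assert (P2 : forall w, m1 (psi w) = m2 w).
  { intro w. unfold psi. rewrite <- C1, C2, sect_spec. reflexivity. }
  assert (Hom : forall (Xa Xb : Type) fa fb ma mb (p : Xa -> Xb),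
             dialg_hom F B fa g ma -> dialg_hom F B fb g mb -> injective mb ->
             (forall z, mb (p z) = ma z) -> dialg_hom F B fa fb p).
  { intros Xa Xb fa fb ma mb p Ha Hb Ib Hp a. apply (Hinj _ mb Ib).
    rewrite <- Hb, Fmap_comp', (Fmap_ext F _ _ _ ma) by auto.
    rewrite Ha, Fmap_comp'. apply Fmap_ext. intro; symmetry; auto. }
  exists phi, psi. split; [|split; [|split; [|split; [|split]]]].
  - eapply Hom; eauto.
  - eapply Hom; eauto.
  - intro z. apply I1. rewrite P2, P1. reflexivity.
  - intro w. apply I2. rewrite P1, P2. reflexivity.
  - intro x. apply I2. rewrite P1, <- C1, C2. reflexivity.
  - exact P1.
Qed.

Theorem proposition1 :
  (forall F B : SetFunctor,
     preserves_empty_monos F -> preserves_empty_monos B ->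
     forall (X Y : Type) (f : Fobj F X -> Fobj B X) (g : Fobj F Y -> Fobj B Y)
            (h : X -> Y),
       dialg_hom F B f g h ->
       (exists (X' : Type) (f' : Fobj F X' -> Fobj B X') (e : X -> X') (m : X' -> Y),
           epi_mono_factorisation F B f g h f' e m) /\
       (forall (X1 : Type) (f1 : Fobj F X1 -> Fobj B X1) (e1 : X -> X1) (m1 : X1 -> Y)
               (X2 : Type) (f2 : Fobj F X2 -> Fobj B X2) (e2 : X -> X2) (m2 : X2 -> Y),
           epi_mono_factorisation F B f g h f1 e1 m1 ->
           epi_mono_factorisation F B f g h f2 e2 m2 ->
           exists (phi : X1 -> X2) (psi : X2 -> X1),
             dialg_hom F B f1 f2 phi /\ dialg_hom F B f2 f1 psi /\
             (forall z, psi (phi z) = z) /\ (forall w, phi (psi w) = w) /\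
             (forall x, phi (e1 x) = e2 x) /\ (forall z, m2 (phi z) = m1 z))) /\
  (forall (F B : SetFunctor)
          (X Y : Type) (f : Fobj F X -> Fobj B X) (g : Fobj F Y -> Fobj B Y)
          (h : X -> Y),
     dialg_hom F B f g h -> inhabited X ->
     exists (X' : Type) (f' : Fobj F X' -> Fobj B X') (e : X -> X') (m : X' -> Y),
       epi_mono_factorisation F B f g h f' e m).

Proof.
  split.
  - intros F B HF HB X Y f g h Hh. split.
    + apply fact_exists; auto. intros. now apply inj_pres.
    + apply fact_unique. intros. now apply inj_pres.
  - intros F B X Y f g h Hh Hi. apply fact_exists; auto.
    intros A m Hm HA. apply inj_inh; auto.
Qed.
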